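(* Assume the setting and hypotheses below, with the constants $c_2>0$ and $\varkappa>0$ independent of $N$ and $M$. Let $l,T>0$, $h=l/N$, $x_i=ih$, and a time mesh $0=t_0<\dots<t_M=T$. For each $j=0,\dots,M-1$ let weights satisfy $g_j^{j+1}>g_{j-1}^{j+1}>\dots>g_0^{j+1}\ge c_2$ and let $\frac{g_j^{j+1}}{2g_j^{j+1}-g_{j-1}^{j+1}}\le\sigma_{j+1}\le1$ (with $g_{-1}^1:=0$); let $\Lambda=\Lambda^{j+1}$ be linear operators on mesh functions vanishing at $x_0,x_N$ with $(-\Lambda y,y)\ge\varkappa\|y\|_0^2$. Let $y$ solve $$\sum_{s=0}^{j}(y_i^{s+1}-y_i^s)g_s^{j+1}=(\Lambda y^{(\sigma_{j+1})})_i+\varphi_i^{j+1}\ (1\le i\le N-1,\ 0\le j\le M-1),\quad y_0^j=y_N^j=0,\quad y_i^0=u_0(x_i),$$ with $y^{(\sigma_{j+1})}=\sigma_{j+1}y^{j+1}+(1-\sigma_{j+1})y^j$. Let $u(x,t)$ be the solution of the differential problem $$\partial_{0t}^\alpha u=\frac{\partial}{\partial x}\Big(k(x,t)\frac{\partial u}{\partial x}\Big)-q(x,t)u+f(x,t),\ 0<x<l,\ 0<t\le T;\quad u(0,t)=u(l,t)=0;\quad u(x,0)=u_0(x),$$ and suppose the scheme has approximation order $\mathcal O(N^{-r_1}+M^{-r_2})$ for some $r_1,r_2>0$, i.e. the truncation error $$\psi_i^{j+1}:=(\Lambda u^{(\sigma_{j+1})})_i-\sum_{s=0}^{j}(u_i^{s+1}-u_i^s)g_s^{j+1}+\varphi_i^{j+1},\qquad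 u_i^j=u(x_i,t_j),$$ satisfies $|\psi_i^{j+1}|\le C(N^{-r_1}+M^{-r_2})$ for all $i,j$ with $C$ independent of $N,M$. Then $\|y^j-u^j\|_0=\mathcal O(N^{-r_1}+M^{-r_2})$ uniformly in $j=0,\dots,M$, i.e. the solution of the scheme converges to $u$ in the mesh $L_2$-norm with the rate of the approximation error.
   Context: $(y,v)=\sum_{i=1}^{N-1}y_iv_ih$, $\|y\|_0^2=(y,y)$. The Caputo derivative of order $\alpha\in(0,1)$ is $\partial_{0t}^\alpha u(x,t)=\frac{1}{\Gamma(1-\alpha)}\int_0^t \partial_\eta u(x,\eta)(t-\eta)^{-\alpha}d\eta$. Here $k\ge c_1>0$, $q\ge0$, $f$ are sufficiently smooth functions. *)

(* Defs.v *)
From Stdlib Require Import Reals Lra Lia.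
From Coquelicot Require Import Coquelicot.
Open Scope R_scope.

Fixpoint sumR (f : nat -> R) (n : nat) : R :=
  match n with
  | O => 0
  | S m => sumR f m + f m
  end.

(** Mesh functions on the spatial grid x_i = i h, i = 0..N, are [nat -> R]
    (only the indices 0..N matter). *)

Definition mesh_ip (N : nat) (h : R) (y v : nat -> R) : R :=
  sumR (fun i => y (S i) * v (S i) * h) (N - 1).

Definition mesh_norm0 (N : nat) (h : R) (y : nat -> R) : R :=
  sqrt (mesh_ip N h y y).

Definition vanishes_at_ends (N : nat) (y : nat -> R) : Prop :=
  y O = 0 /\ y N = 0.

Definition Gamma_fn (a : R) : R :=
  RInt_gen (fun s => Rpower s (a - 1) * exp (- s))
    (at_right 0) (Rbar_locally p_infty).

Definition caputo_integrand (alpha : R) (u : R -> R -> R) (x t : R) : R -> R :=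
  fun eta => Derive (fun e => u x e) eta * Rpower (t - eta) (- alpha).

Definition caputo (alpha : R) (u : R -> R -> R) (x t : R) : R :=
  / Gamma_fn (1 - alpha) *
  RInt_gen (caputo_integrand alpha u x t) (at_point 0) (at_left t).

Definition solves_fractional_problem (alpha l T : R)
    (k q f : R -> R -> R) (u0 : R -> R) (u : R -> R -> R) : Prop :=
  (forall x t, 0 < x < l -> 0 < t <= T ->
     ex_derive (fun z => u z t) x /\
     ex_derive (fun z => k z t * Derive (fun w => u w t) z) x /\
     ex_RInt_gen (caputo_integrand alpha u x t) (at_point 0) (at_left t) /\
     caputo alpha u x t =
       Derive (fun z => k z t * Derive (fun w => u w t) z) x
       - q x t * u x t + f x t) /\
  (forall t, 0 <= t <= T -> u 0 t = 0 /\ u l t = 0) /\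
  (forall x, 0 <= x <= l -> u x 0 = u0 x).

(** g_{j-1}^{j+1}, with the convention g_{-1}^{1} := 0 *)
Definition g_prev (g : nat -> nat -> R) (j : nat) : R :=
  match j with
  | O => 0
  | S j' => g (S j) j'
  end.

Definition sigma_level (sigma : nat -> R) (y : nat -> nat -> R) (j : nat)
  : nat -> R :=
  fun i => sigma (S j) * y (S j) i + (1 - sigma (S j)) * y j i.

Definition disc_frac (g : nat -> nat -> R) (y : nat -> nat -> R) (j i : nat) : R :=
  sumR (fun s => (y (S s) i - y s i) * g (S j) s) (S j).

(* Main.v *)
Require Import Defs.
From Stdlib Require Import Reals.
From Coquelicot Require Import Coquelicot.
From Stdlib Require Import Lra Lia Psatz FunctionalExtensionality.
Open Scope R_scope.

Lemma sumR_S f n : sumR f (S n) = sumR f n + f n.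
Proof. reflexivity. Qed.

Lemma sumR_ext f g n : (forall i, (i < n)%nat -> f i = g i) -> sumR f n = sumR g n.
Proof. induction n; intros H; simpl; auto. rewrite IHn by (intros; apply H; lia). rewrite H by lia. auto. Qed.

Lemma sumR_le f g n : (forall i, (i < n)%nat -> f i <= g i) -> sumR f n <= sumR g n.
Proof. induction n; intros H; simpl; [lra|]. assert (H1 := H n ltac:(lia)).
 assert (sumR f n <= sumR g n) by (apply IHn; intros; apply H; lia). lra. Qed.

Lemma sumR_plus f g n : sumR (fun i => f i + g i) n = sumR f n + sumR g n.
Proof. induction n; simpl; [lra|]. rewrite IHn; lra. Qed.

Lemma sumR_minus f g n : sumR (fun i => f i - g i) n = sumR f n - sumR g n.
Proof. induction n; simpl; [lra|]. rewrite IHn; lra. Qed.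

Lemma sumR_scal c f n : sumR (fun i => c * f i) n = c * sumR f n.
Proof. induction n; simpl; [lra|]. rewrite IHn; lra. Qed.

Lemma sumR_const c n : sumR (fun _ => c) n = INR n * c.
Proof. induction n; simpl sumR; [simpl; lra|]. rewrite IHn, S_INR; lra. Qed.

Lemma sumR_swap (F : nat -> nat -> R) n m :
  sumR (fun i => sumR (fun s => F i s) m) n = sumR (fun s => sumR (fun i => F i s) n) m.
Proof. induction n; simpl.
 - symmetry. induction m; simpl; lra.
 - rewrite IHn. rewrite <- sumR_plus. reflexivity. Qed.

Lemma abel (g phi : nat -> R) (mu0 mu : R) (m : nat) :
  0 <= g O -> (forall s, (s < m)%nat -> g s <= g (S s)) ->
  mu0 <= phi O -> mu <= mu0 -> (forall s, (1 <= s <= m)%nat -> mu <= phi s) ->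
  g O * (mu0 - mu) + g m * (mu - phi (S m)) <= sumR (fun s => g s * (phi s - phi (S s))) (S m).
Proof.
  intros Hg0 Hmon Hp0 Hmu Hp. revert Hmon Hp. induction m as [|m IH]; intros Hmon Hp.
  - simpl. nra.
  - rewrite sumR_S.
    assert (IH' := IH (fun s Hs => Hmon s ltac:(lia)) (fun s Hs => Hp s ltac:(lia))).
    assert (H1 := Hmon m ltac:(lia)). assert (H2 := Hp (S m) ltac:(lia)).
    assert (0 <= (g (S m) - g m) * (phi (S m) - mu)) by (apply Rmult_le_pos; lra).
    nra.
Qed.

Lemma alik (g v : nat -> R) (gp sig : R) (j : nat) :
  0 <= g O -> (forall s, (s < j)%nat -> g s <= g (S s)) ->
  0 <= gp -> gp < g j -> (forall j', j = S j' -> gp = g j') ->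
  g j / (2 * g j - gp) <= sig <= 1 ->
  (1/2) * sumR (fun s => g s * (v (S s) ^ 2 - v s ^ 2)) (S j)
  <= (sig * v (S j) + (1 - sig) * v j) * sumR (fun s => (v (S s) - v s) * g s) (S j).
Proof.
  intros Hg0 Hmon Hgp0 Hgp Hgpe [Hs1 Hs2].
  assert (Hden : 0 < 2 * g j - gp) by lra.
  assert (Hsd : g j <= sig * (2 * g j - gp)).
  { assert (E : g j = g j / (2 * g j - gp) * (2 * g j - gp)) by (field; lra).
    rewrite E at 1. apply Rmult_le_compat_r; lra. }
  assert (Hsp : 0 <= sig) by nra.
  set (c := 1 - sig). set (w := v (S j) - v j).
  set (phi := fun s => (v (S j) - v s) ^ 2 / 2 - c * w * (v (S j) - v s)).
  assert (Eq : (sig * v (S j) + (1 - sig) * v j) * sumR (fun s => (v (S s) - v s) * g s) (S j)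
     - (1/2) * sumR (fun s => g s * (v (S s) ^ 2 - v s ^ 2)) (S j)
     = sumR (fun s => g s * (phi s - phi (S s))) (S j)).
  { rewrite <- !sumR_scal, <- sumR_minus. apply sumR_ext. intros i _.
    unfold phi, c, w. clear. field. }
  fold c in Eq.
  set (mu := - (c * w) ^ 2 / 2).
  assert (Hphi : forall s, mu <= phi s).
  { intros s. assert (E : phi s - mu = ((v (S j) - v s) - c * w) ^ 2 / 2) by (unfold phi, mu; field).
    assert (0 <= ((v (S j) - v s) - c * w) ^ 2) by (apply pow2_ge_0). lra. }
  assert (Hphij : phi j = w ^ 2 / 2 - c * w ^ 2) by (unfold phi, w; field).
  assert (HphiS : phi (S j) = 0) by (unfold phi; field).
  destruct j as [|j'].
  - assert (sumR (fun s => g s * (phi s - phi (S s))) 1 = g O * (phi O - phi 1%nat)) by (simpl; ring).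
    assert (sig >= 1/2) by nra.
    assert (0 <= g O * (phi O - phi 1%nat)).
    { rewrite HphiS, Hphij. unfold c. assert (0 <= w^2) by nra. 
      apply Rmult_le_pos; [lra| nra]. }
    lra.
  - rewrite (sumR_S (fun s => g s * (phi s - phi (S s))) (S j')) in Eq.
    assert (Hab := abel g phi mu mu j' Hg0 (fun s Hs => Hmon s ltac:(lia)) (Hphi O) (Rle_refl _)
                   (fun s _ => Hphi s)).
    rewrite (Hgpe j' eq_refl) in *.
    assert (E2 : g j' * (mu - phi (S j')) + g (S j') * (phi (S j') - phi (S (S j')))
       = (w^2/2) * (2*sig*g (S j') - sig * g j' - g (S j')) + (w^2/2) * (g j' * (1 - sig) * sig)).
    { rewrite HphiS, Hphij. unfold mu, c. field. }
    assert (0 <= (w^2/2) * (2*sig*g (S j') - sig * g j' - g (S j'))) by (apply Rmult_le_pos; nra).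
    assert (0 <= (w^2/2) * (g j' * (1 - sig) * sig)).
    { apply Rmult_le_pos; [nra|]. apply Rmult_le_pos; [|lra]. apply Rmult_le_pos; lra. }
    lra.
Qed.

Theorem theorem2 :
  forall (alpha l T c1 : R) (k q f : R -> R -> R) (u0 : R -> R) (u : R -> R -> R),
    0 < alpha < 1 -> 0 < l -> 0 < T -> 0 < c1 ->
    (forall x t, 0 <= x <= l -> 0 <= t <= T -> c1 <= k x t) ->
    (forall x t, 0 <= x <= l -> 0 <= t <= T -> 0 <= q x t) ->
    solves_fractional_problem alpha l T k q f u0 u ->
  forall (c2 kappa C r1 r2 : R),
    0 < c2 -> 0 < kappa -> 0 < r1 -> 0 < r2 ->
  exists K : R, 0 < K /\
  forall (N M : nat) (t : nat -> R) (g : nat -> nat -> R) (sigma : nat -> R)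
         (Lambda : nat -> (nat -> R) -> (nat -> R))
         (phi : nat -> nat -> R) (y : nat -> nat -> R),
    (0 < N)%nat -> (0 < M)%nat ->
    let h := l / INR N in
    (* time mesh 0 = t_0 < ... < t_M = T *)
    t O = 0 -> t M = T -> (forall j, (j < M)%nat -> t j < t (S j)) ->
    (* weights: g_j^{j+1} > g_{j-1}^{j+1} > ... > g_0^{j+1} >= c2 *)
    (forall j, (j < M)%nat ->
       c2 <= g (S j) O /\ (forall s, (s < j)%nat -> g (S j) s < g (S j) (S s))) ->
    (* g_j/(2 g_j - g_{j-1}) <= sigma_{j+1} <= 1 *)
    (forall j, (j < M)%nat ->
       g (S j) j / (2 * g (S j) j - g_prev g j) <= sigma (S j) <= 1) ->
    (* Lambda^{j+1}: linear operators on mesh functions vanishing at x_0, x_N *)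
    (forall j, (j < M)%nat -> forall (a b : R) (z w : nat -> R),
       vanishes_at_ends N z -> vanishes_at_ends N w ->
       forall i, Lambda (S j) (fun m => a * z m + b * w m) i
                 = a * Lambda (S j) z i + b * Lambda (S j) w i) ->
    (forall j, (j < M)%nat -> forall z : nat -> R, vanishes_at_ends N z ->
       kappa * mesh_ip N h z z <= - mesh_ip N h (Lambda (S j) z) z) ->
    (* the difference scheme *)
    (forall j i, (j < M)%nat -> (1 <= i <= N - 1)%nat ->
       disc_frac g y j i = Lambda (S j) (sigma_level sigma y j) i + phi (S j) i) ->
    (forall j, (j <= M)%nat -> y j O = 0 /\ y j N = 0) ->
    (forall i, (i <= N)%nat -> y O i = u0 (INR i * h)) ->
    (* approximation order O(N^{-r1} + M^{-r2}) of the truncation error *)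
    (let uu := fun j i => u (INR i * h) (t j) in
     forall j i, (j < M)%nat -> (1 <= i <= N - 1)%nat ->
       Rabs (Lambda (S j) (sigma_level sigma uu j) i - disc_frac g uu j i
             + phi (S j) i)
       <= C * (Rpower (INR N) (- r1) + Rpower (INR M) (- r2))) ->
    (* convergence with the same rate, uniformly in j *)
    forall j, (j <= M)%nat ->
      mesh_norm0 N h (fun i => y j i - u (INR i * h) (t j))
      <= K * (Rpower (INR N) (- r1) + Rpower (INR M) (- r2)).
Proof.
intros alpha l T c1 k q f u0 u Ha Hl HT Hc1 Hk Hq Hsol c2 kappa C r1 r2 Hc2 Hkap Hr1 Hr2.
destruct Hsol as [_ [Hbc Hic]].
exists (sqrt (l / (2*kappa*c2)) * Rabs C + 1). split.
{ assert (0 <= sqrt (l/(2*kappa*c2))) by apply sqrt_pos. assert (0 <= Rabs C) by apply Rabs_pos. nra. }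
intros N M t g sigma Lambda phi y HN HM h Ht0 HtM Htinc Hg Hsig Hlin Hkappa Hscheme Hbnd Hinit Happrox j Hj.
cbv zeta in Happrox.
set (R0 := Rpower (INR N) (-r1) + Rpower (INR M) (-r2)) in *.
assert (HR0 : 0 < R0).
{ unfold R0, Rpower. pose proof (exp_pos ((-r1) * ln (INR N))). pose proof (exp_pos ((-r2)*ln (INR M))). lra. }
set (B := C * R0).
assert (HNr : 0 < INR N) by (apply lt_0_INR; lia).
assert (Hh : 0 < h) by (unfold h; apply Rdiv_lt_0_compat; lra).
assert (HNh : INR N * h = l) by (unfold h; field; lra).
assert (Htmono : forall a b, (a <= b)%nat -> (b <= M)%nat -> t a <= t b).
{ intros a b Hab. induction Hab; intros HbM; [lra|].
  assert (t m < t (S m)) by (apply Htinc; lia). specialize (IHHab ltac:(lia)). lra. }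
assert (Ht : forall s, (s <= M)%nat -> 0 <= t s <= T).
{ intros s Hs. split; [rewrite <- Ht0; apply Htmono; lia | rewrite <- HtM; apply Htmono; lia]. }
set (uu := fun s i => u (INR i * h) (t s)).
set (zz := fun s i => y s i - uu s i).
assert (Huu0 : forall s, (s <= M)%nat -> uu s O = 0).
{ intros s Hs. unfold uu. simpl INR. rewrite Rmult_0_l. apply (Hbc _ (Ht s Hs)). }
assert (HuuN : forall s, (s <= M)%nat -> uu s N = 0).
{ intros s Hs. unfold uu. rewrite HNh. apply (Hbc _ (Ht s Hs)). }
assert (Hzz0 : forall s, (s <= M)%nat -> zz s O = 0).
{ intros s Hs. unfold zz. rewrite Huu0 by auto. destruct (Hbnd s Hs) as [H1 _]. rewrite H1. ring. }
assert (HzzN : forall s, (s <= M)%nat -> zz s N = 0).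
{ intros s Hs. unfold zz. rewrite HuuN by auto. destruct (Hbnd s Hs) as [_ H1]. rewrite H1. ring. }
assert (Hzinit : forall i, (i <= N)%nat -> zz O i = 0).
{ intros i Hi. unfold zz, uu. rewrite Hinit by auto. rewrite Ht0. rewrite Hic; [ring|]. split.
  - apply Rmult_le_pos; [apply pos_INR|lra].
  - rewrite <- HNh. apply Rmult_le_compat_r; [lra| apply le_INR; lia]. }
set (e := fun s => mesh_ip N h (zz s) (zz s)).
assert (He0 : e O = 0).
{ unfold e, mesh_ip. rewrite (sumR_ext _ (fun _ => 0)). rewrite sumR_const; ring.
  intros i Hi. rewrite Hzinit by lia. ring. }
set (D := l * B^2 / (2*kappa)).
assert (HD : 0 <= D).
{ unfold D. assert (0 <= B^2) by apply pow2_ge_0. unfold Rdiv.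
  apply Rmult_le_pos; [apply Rmult_le_pos; lra|]. left; apply Rinv_0_lt_compat; lra. }
assert (Hgmono : forall n, (n < M)%nat -> forall s, (s <= n)%nat -> g (S n) O <= g (S n) s).
{ intros n Hn s Hs. induction s; [lra|]. destruct (Hg n Hn) as [_ Hm].
  specialize (Hm s ltac:(lia)). specialize (IHs ltac:(lia)). lra. }
assert (Henergy : forall n, (n < M)%nat -> sumR (fun s => g (S n) s * (e (S s) - e s)) (S n) <= D).
{ intros n Hn.
  set (zs := sigma_level sigma zz n).
  set (psi := fun i => Lambda (S n) (sigma_level sigma uu n) i - disc_frac g uu n i + phi (S n) i).
  assert (Hvan : vanishes_at_ends N zs).
  { unfold vanishes_at_ends, zs, sigma_level. rewrite !Hzz0, !HzzN by lia. split; ring. }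
  assert (Hvy : vanishes_at_ends N (sigma_level sigma y n)).
  { unfold vanishes_at_ends, sigma_level. destruct (Hbnd n ltac:(lia)) as [A1 A2].
    destruct (Hbnd (S n) ltac:(lia)) as [A3 A4]. rewrite A1, A2, A3, A4. split; ring. }
  assert (Hvu : vanishes_at_ends N (sigma_level sigma uu n)).
  { unfold vanishes_at_ends, sigma_level. rewrite !Huu0, !HuuN by lia. split; ring. }
  assert (Hzs_eq : zs = fun m => 1 * sigma_level sigma y n m + (-1) * sigma_level sigma uu n m).
  { apply functional_extensionality; intros m. unfold zs, sigma_level, zz. ring. }
  assert (Hpt : forall i, (1 <= i <= N-1)%nat -> disc_frac g zz n i = Lambda (S n) zs i + psi i).
  { intros i Hi. assert (E1 : disc_frac g zz n i = disc_frac g y n i - disc_frac g uu n i).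
    { unfold disc_frac. rewrite <- sumR_minus. apply sumR_ext. intros s _. unfold zz. ring. }
    rewrite E1, Hzs_eq, (Hlin n Hn 1 (-1) _ _ Hvy Hvu i), (Hscheme n i Hn Hi). unfold psi. ring. }
  assert (Hpsi : forall i, (1 <= i <= N-1)%nat -> psi i ^ 2 <= B^2).
  { intros i Hi. pose proof (Happrox n i Hn Hi) as Ha'.
    assert (Hab : Rabs (psi i) <= B) by exact Ha'.
    unfold Rabs in Hab. destruct (Rcase_abs (psi i)); nra. }
  set (S1 := sumR (fun i => zs (S i) * disc_frac g zz n (S i) * h) (N-1)).
  assert (Hgp : 0 <= g_prev g n /\ g_prev g n < g (S n) n /\
                (forall j', n = S j' -> g_prev g n = g (S n) j')).
  { destruct (Hg n Hn) as [Hg0 Hgm]. destruct n as [|n']; simpl.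
    - split; [lra|split; [lra|]]. intros j' E; discriminate.
    - assert (H1 := Hgmono (S n') Hn n' ltac:(lia)). assert (H2 := Hgm n' ltac:(lia)).
      split; [lra|split; [lra|]]. intros j' E; injection E; intros ->; reflexivity. }
  destruct Hgp as [Hgp1 [Hgp2 Hgp3]].
  assert (Hlow : (1/2) * sumR (fun s => g (S n) s * (e (S s) - e s)) (S n) <= S1).
  { set (F := fun i s => h * g (S n) s * (zz (S s) (S i) ^ 2 - zz s (S i) ^ 2)).
    assert (EL : sumR (fun i => h * ((1/2) * sumR (fun s => g (S n) s *
                 (zz (S s) (S i) ^ 2 - zz s (S i) ^ 2)) (S n))) (N-1)
                 = (1/2) * sumR (fun i => sumR (fun s => F i s) (S n)) (N-1)).
    { rewrite <- sumR_scal. apply sumR_ext. intros i _. rewrite <- !sumR_scal.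
      apply sumR_ext. intros s _. unfold F. field. }
    assert (ER : (1/2) * sumR (fun s => g (S n) s * (e (S s) - e s)) (S n)
                 = (1/2) * sumR (fun s => sumR (fun i => F i s) (N-1)) (S n)).
    { f_equal. apply sumR_ext. intros s _. unfold e, mesh_ip. rewrite <- sumR_minus, <- sumR_scal.
      apply sumR_ext. intros i _. unfold F. ring. }
    rewrite ER, <- sumR_swap, <- EL. unfold S1. apply sumR_le. intros i Hi.
    destruct (Hg n Hn) as [Hg0 Hgm].
    assert (Hal := alik (g (S n)) (fun s => zz s (S i)) (g_prev g n) (sigma (S n)) n
             ltac:(lra) (fun s Hs => Rlt_le _ _ (Hgm s Hs)) Hgp1 Hgp2 Hgp3 (Hsig n Hn)).
    assert (Eq2 : zs (S i) * disc_frac g zz n (S i) =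
      (sigma (S n) * zz (S n) (S i) + (1 - sigma (S n)) * zz n (S i)) *
      sumR (fun s => (zz (S s) (S i) - zz s (S i)) * g (S n) s) (S n)) by reflexivity.
    rewrite Eq2. simpl in Hal |- *. nra. }
  assert (Hup1 : S1 = mesh_ip N h (Lambda (S n) zs) zs + sumR (fun i => zs (S i) * psi (S i) * h) (N-1)).
  { unfold S1, mesh_ip. rewrite <- sumR_plus. apply sumR_ext. intros i Hi.
    rewrite Hpt by lia. ring. }
  pose proof (Hkappa n Hn zs Hvan) as Hk2.
  assert (Hup2 : sumR (fun i => zs (S i) * psi (S i) * h) (N-1) <=
       kappa * mesh_ip N h zs zs + sumR (fun i => B^2 * h / (4*kappa)) (N-1)).
  { unfold mesh_ip. rewrite <- sumR_scal, <- sumR_plus. apply sumR_le. intros i Hi.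
    assert (E : kappa * (zs (S i) * zs (S i) * h) + psi (S i) ^ 2 * h / (4*kappa) - zs (S i) * psi (S i) * h
               = h / kappa * (kappa * zs (S i) - psi (S i) / 2) ^ 2) by (field; lra).
    assert (0 <= h / kappa * (kappa * zs (S i) - psi (S i) / 2) ^ 2).
    { apply Rmult_le_pos; [apply Rlt_le, Rdiv_lt_0_compat; lra| apply pow2_ge_0]. }
    assert (psi (S i) ^ 2 * h / (4*kappa) <= B^2 * h / (4*kappa)).
    { unfold Rdiv. apply Rmult_le_compat_r; [left; apply Rinv_0_lt_compat; lra|].
      apply Rmult_le_compat_r; [lra|]. apply Hpsi; lia. }
    lra. }
  rewrite sumR_const in Hup2.
  assert (HN1 : INR (N-1) * (B^2 * h / (4*kappa)) <= D / 2).
  { assert (INR (N-1) <= INR N) by (apply le_INR; lia).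
    assert (E : D / 2 = INR N * (B^2 * h / (4*kappa))) by (unfold D; rewrite <- HNh; field; lra).
    rewrite E. apply Rmult_le_compat_r; [|lra].
    unfold Rdiv. apply Rmult_le_pos; [apply Rmult_le_pos; [apply pow2_ge_0|lra]|].
    left; apply Rinv_0_lt_compat; lra. }
  lra. }
set (Dc := D / c2).
assert (HDc : 0 <= Dc) by (unfold Dc, Rdiv; apply Rmult_le_pos; [lra| left; apply Rinv_0_lt_compat; lra]).
assert (Hebound : forall n m, (m <= n)%nat -> (m <= M)%nat -> e m <= Dc).
{ induction n; intros m Hmn HmM.
  - replace m with O by lia. rewrite He0. lra.
  - destruct (Nat.eq_dec m (S n)) as [->|Hne]; [|apply IHn; lia].
    assert (HnM : (n < M)%nat) by lia.
    pose proof (Henergy n HnM) as HE.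
    destruct (Hg n HnM) as [Hg0c Hgm].
    assert (Hb : forall s, (1 <= s <= n)%nat -> - Dc <= - e s).
    { intros s Hs. assert (e s <= Dc) by (apply IHn; lia). lra. }
    assert (Hab := abel (g (S n)) (fun s => - e s) 0 (-Dc) n ltac:(lra)
                   (fun s Hs => Rlt_le _ _ (Hgm s Hs)) ltac:(cbv beta; rewrite He0; lra) ltac:(lra) Hb).
    rewrite (sumR_ext _ (fun s => g (S n) s * (e (S s) - e s))) in Hab by (intros; ring).
    assert (Hgn := Hgmono n HnM n ltac:(lia)).
    assert (ED : D = c2 * Dc) by (unfold Dc; field; lra).
    assert (0 <= (g (S n) O - c2) * Dc) by (apply Rmult_le_pos; lra).
    destruct (Rle_or_lt (e (S n)) Dc) as [?|Hlt]; [auto|].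
    assert (0 < g (S n) n * (e (S n) - Dc)) by (apply Rmult_lt_0_compat; lra).
    lra. }
unfold mesh_norm0.
change (mesh_ip N h (fun i => y j i - u (INR i * h) (t j)) (fun i => y j i - u (INR i * h) (t j))) with (e j).
assert (Hej : e j <= Dc) by (apply (Hebound j); lia).
apply Rle_trans with (sqrt Dc); [apply sqrt_le_1_alt; auto|].
assert (Ha0 : 0 <= l / (2*kappa*c2)) by (apply Rlt_le, Rdiv_lt_0_compat; nra).
assert (EDc : Dc = l / (2*kappa*c2) * Rsqr B) by (unfold Dc, D, Rsqr; field; lra).
rewrite EDc, sqrt_mult_alt, sqrt_Rsqr_abs by auto.
unfold B. rewrite Rabs_mult, (Rabs_pos_eq R0) by lra.
assert (0 <= sqrt (l/(2*kappa*c2))) by apply sqrt_pos. assert (0 <= Rabs C) by apply Rabs_pos.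
nra.
Qed.
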